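(* If the Cartesian product $\prod_{\alpha\in\Lambda}X_\alpha$ (with the product topology) is locally Menger, then $X_\alpha$ is Menger for all but finitely many $\alpha\in\Lambda$.
   Context: A space $X$ is Menger if for each sequence $(\mathcal{U}_n)$ of open covers of $X$ there is a sequence $(\mathcal{V}_n)$ with each $\mathcal{V}_n$ a finite subset of $\mathcal{U}_n$ and $\bigcup_{n}\bigcup\mathcal{V}_n=X$. A space $X$ is locally Menger if for each $x\in X$ there exist an open set $U$ and a Menger subspace $Y$ of $X$ with $x\in U\subseteq Y$. *)

(* Defs.v *)
From HB Require Import structures.
From mathcomp Require Import all_boot all_order all_algebra.
From mathcomp Require Import all_classical all_reals all_analysis.
Set Implicit Arguments. Unset Strict Implicit. Unset Printing Implicit Defensive.
Local Open Scope classical_set_scope.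

(* Y (a subset of the space T, with the subspace topology) is Menger:
   an open cover of the subspace Y is represented by a family of open sets
   of T whose union contains Y (every open set of the subspace is the trace
   on Y of an open set of T). *)
Definition menger_set {T : topologicalType} (Y : set T) : Prop :=
  forall U : nat -> set (set T),
    (forall n, (forall A, U n A -> open A) /\ Y `<=` \bigcup_(A in U n) A) ->
    exists V : nat -> set (set T),
      (forall n, finite_set (V n) /\ V n `<=` U n) /\
      Y `<=` \bigcup_n \bigcup_(A in V n) A.

Definition menger (T : topologicalType) : Prop := menger_set [set: T].

Definition locally_menger (T : topologicalType) : Prop :=
  forall x : T, exists (U : set T) (Y : set T),
    open U /\ U x /\ U `<=` Y /\ menger_set Y.

(* Main.v *)
Require Import Defs.
From mathcomp Require Import finmap.
From mathcomp Require Import all_boot all_order all_algebra.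
From mathcomp Require Import all_classical all_reals all_analysis.
Local Open Scope classical_set_scope.

Lemma basic (Lambda : Type) (X : Lambda -> topologicalType) (U : set (prod_topology X)) x :
  open U -> U x -> exists F : set Lambda, finite_set F /\
    forall f : prod_topology X, (forall b, F b -> f b = x b) -> U f.
Proof.
move=> oU Ux.
have : nbhs x U by exact: open_nbhs_nbhs.
move=> [] P [] [] Q QfinP <- [] V JV Vpz VU.
have [L Lsub VL] := QfinP _ JV.
have Lsub' : forall M : set (prod_topology X), [set` L] M -> exists w (N : set (X w)), open N /\ M = (fun f : prod_topology X => f w) @^-1` N.
  move=> M /Lsub /set_mem [w _ [N oN <-]]; by exists w, N.
clear Lsub.
pose g M := if pselect (exists w (N : set (X w)), open N /\ M = (fun f : prod_topology X => f w) @^-1` N) is left h then Some (projT1 (cid h)) else None.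
exists (Some @^-1` (g @` [set` L])); split.
  apply: finite_preimage; first by move=> ? ? ? ? [].
  apply: finite_image; exact: finite_fset.
move=> f fx; apply: VU; exists V; first exact: JV.
change (V f).
rewrite -VL => M LM.
have [w [[N [oN EM]] gM]] : exists w, (exists N : set (X w), open N /\ M = (fun f : prod_topology X => f w) @^-1` N) /\ g M = Some w.
  rewrite /g; case: pselect => h; last by exfalso; apply: h; apply: Lsub'.
  by case: (cid h) => w' spec /=; exists w'.
have xM : M x by move: Vpz; rewrite -VL; apply.
change (M f); rewrite EM in xM *; rewrite /= fx //.
by exists M.
Qed.


Theorem proposition4p4 (Lambda : Type) (X : Lambda -> topologicalType)
  (hne : forall a, [set: X a] !=set0) :
  locally_menger (prod_topology X) ->
  finite_set [set a : Lambda | ~ menger (X a)].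
Proof.
move=> LM.
pose x : prod_topology X := fun a => projT1 (cid (hne a)).
have [U [Y [oU [Ux [UY mY]]]]] := LM x.
have [F [finF HF]] := basic _ _ _ _ oU Ux.
apply: sub_finite_set finF => a nMa; apply: contrapT => Fa; apply: nMa.
pose pre (A : set (X a)) : set (prod_topology X) := (fun f : prod_topology X => f a) @^-1` A.
pose z (y : X a) : prod_topology X := @dfwith {classic Lambda} X x a y.
have za y : z y a = y by rewrite /z dfwithin.
have zU y : U (z y).
  apply: HF => b Fb; rewrite /z dfwithout //.
  by apply/eqP => e; apply: Fa; rewrite e.
have pre_inj : injective pre.
  move=> A B e; apply/seteqP; split => y Ay.
    have : pre B (z y) by rewrite -e /pre /= za.
    by rewrite /pre /= za.
  have : pre A (z y) by rewrite e /pre /= za.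
  by rewrite /pre /= za.
move=> Uc hU.
pose U' n := pre @` Uc n.
have pc : continuous (fun f : prod_topology X => f a).
  exact: (@proj_continuous {classic Lambda} X a).
have [V' [hV' cV']] : exists V' : nat -> set (set (prod_topology X)),
      (forall n, finite_set (V' n) /\ V' n `<=` U' n) /\
      Y `<=` \bigcup_n \bigcup_(A in V' n) A.
  apply: mY => n; split.
    move=> _ [A UA <-]; apply: open_comp; last by case: (hU n) => + _; apply.
    by move=> f _; apply: pc.
  move=> f _; have [A UA Afa] := (hU n).2 (f a) I.
  by exists (pre A) => //; exists A.
exists (fun n => Uc n `&` (pre @^-1` V' n)); split.
  move=> n; split; last by move=> A [].
  apply: (@sub_finite_set _ _ (pre @^-1` V' n)); first by move=> A [].
  apply: finite_preimage (hV' n).1.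
  by move=> A B _ _; apply: pre_inj.
move=> y _; have [n _ [B VB Bz]] := cV' _ (UY _ (zU y)).
have [A UA eB] := (hV' n).2 B VB.
exists n => //; exists A; first by split => //; rewrite /= eB.
by move: Bz; rewrite -eB /pre /= za.
Qed.
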